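(* Let $F$ be a non-empty union-closed family and $F_c\subseteq F$. Let $S=\bigcup F_c$ and $K=\bigcup F\setminus\bigcup F_c$. Let $w$ be a function from elements to $\mathbb{N}$ with $w(a)>0$ for some $a\in\bigcup F$ and $w(x)=0$ for all $x\in K$. If $\mathrm{fs}(F',w,\bigcup F_c)\ge 0$ for every $F'\in\mathrm{uce}(F_c)$, then $F$ is Frankl's.
   Context: All sets and families are finite. A family $F$ is union closed if $A\cup B\in F$ for all $A,B\in F$; it is union closed for $F_c$ if it is union closed and $A\cup B\in F$ for all $A\in F$, $B\in F_c$. $\mathrm{uce}(F_c)=\{F' : F'\subseteq\mathcal{P}(\bigcup F_c),\ F' \text{ union closed for } F_c\}$. $F$ is Frankl's if there is $a \in \bigcup F$ with $2\cdot|\{A\in F: a\in A\}| \ge |F|$. $\mathrm{sw}(w,A)=\sum_{a\in A}w(a)$; $\mathrm{ss}(A,w,X)=2\,\mathrm{sw}(w,A)-\mathrm{sw}(w,X)\in\mathbb{Z}$; $\mathrm{fs}(F,w,X)=\sum_{A\in F}\mathrm{ss}(A,w,X)$. *)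

(* Defs.v *)
From mathcomp Require Import all_boot all_order all_algebra.
Set Implicit Arguments. Unset Strict Implicit. Unset Printing Implicit Defensive.
Import GRing.Theory Num.Theory.

Section Defs.
Variable T : finType.

Definition bigcupF (F : {set {set T}}) : {set T} := \bigcup_(A in F) A.

Definition union_closed (F : {set {set T}}) : Prop :=
  forall A B, A \in F -> B \in F -> A :|: B \in F.

Definition union_closed_for (F Fc : {set {set T}}) : Prop :=
  union_closed F /\ (forall A B, A \in F -> B \in Fc -> A :|: B \in F).

Definition in_uce (Fc F' : {set {set T}}) : Prop :=
  F' \subset powerset (bigcupF Fc) /\ union_closed_for F' Fc.

Definition frankl (F : {set {set T}}) : Prop :=
  exists2 a, a \in bigcupF F & #|F| <= 2 * #|[set A in F | a \in A]|.

Definition sw (w : T -> nat) (A : {set T}) : nat := \sum_(a in A) w a.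

Definition ss (A : {set T}) (w : T -> nat) (X : {set T}) : int :=
  (2 * sw w A)%:Z - (sw w X)%:Z.

Definition fs (F : {set {set T}}) (w : T -> nat) (X : {set T}) : int :=
  \sum_(A in F) ss A w X.

End Defs.

(* Main.v *)
Require Import Defs.
From mathcomp Require Import all_boot all_order all_algebra.
Import GRing.Theory Num.Theory.

Lemma sum_posz (I : finType) (P : pred I) (f : I -> nat) :
  (\sum_(i | P i) Posz (f i))%R = Posz (\sum_(i | P i) f i).
Proof. by rewrite (big_morph Posz PoszD (erefl _)). Qed.

Lemma posz_muln (n m : nat) : ((Posz n) *+ m)%R = Posz (m * n)%N.
Proof.
elim: m => [|m IH]; first by rewrite GRing.mulr0n.
by rewrite GRing.mulrSr IH mulSn PoszD GRing.addrC.
Qed.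

Theorem lemma4 (T : finType) (F Fc : {set {set T}}) (w : T -> nat) :
  F != set0 ->
  union_closed F ->
  Fc \subset F ->
  (exists2 a : T, (a \in bigcupF F) & (0 < w a)%N) ->
  (forall x, x \in bigcupF F :\: bigcupF Fc -> w x = 0) ->
  (forall F', in_uce Fc F' -> (0 <= fs F' w (bigcupF Fc))%R) ->
  frankl F.
Proof.
move=> _ ucF sFcF [a0 a0F wa0] w0 Huce.
set S := bigcupF Fc.
have SF : S \subset bigcupF F.
  apply/subsetP=> x /bigcupP [C CFc xC]; apply/bigcupP; exists C => //.
  exact: (subsetP sFcF).
have CS : forall C, C \in Fc -> C \subset S.
  by move=> C CFc; exact: (bigcup_sup C CFc).
have AF : forall A, A \in F -> A \subset bigcupF F.
  by move=> A AF; exact: (bigcup_sup A AF).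
pose G (X : {set T}) := [set B in powerset S | (B :|: X) \in F].
have GX : forall X, in_uce Fc (G X).
  move=> X; split.
    by apply/subsetP=> B; rewrite inE => /andP [].
  split.
    move=> B1 B2; rewrite !inE => /andP [s1 f1] /andP [s2 f2].
    rewrite subUset s1 s2 /=.
    by rewrite -[X in _ :|: X]setUid setUACA; apply: ucF.
  move=> B C; rewrite !inE => /andP [s1 f1] CFc.
  rewrite subUset s1 CS //=.
  rewrite setUAC; apply: ucF => //; exact: (subsetP sFcF).
pose P := [set X : {set T} | X :&: S == set0].
have ssU : forall A, A \in F -> ss A w S = ss (A :&: S) w S.
  move=> A AinF; rewrite /ss /sw.
  rewrite (bigID (fun a => a \in S)) /= [X in _ + X]big1 ?addn0; last first.
    move=> a /andP [aA aS]; apply: w0; rewrite inE aS /=.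
    exact: (subsetP (AF A AinF)).
  by rewrite [in RHS](eq_bigl (fun a => (a \in A) && (a \in S))) // => a; rewrite inE.
have decomp : fs F w S = (\sum_(X in P) fs (G X) w S)%R.
  rewrite /fs (partition_big (fun A => A :\: S) (fun X => X \in P)); last first.
    by move=> A _; rewrite inE setDE -setIA (setIC (~: S)) setICr setI0.
  apply: eq_bigr => X; rewrite inE => /eqP XS.
  rewrite (reindex_onto (fun B => B :|: X) (fun A => A :&: S)); last first.
    by move=> A /andP [_ /eqP <-]; rewrite setID.
  have XSd : X :\: S = X by apply/setDidPl; rewrite -setI_eq0 XS.
  apply: eq_big => B.
    rewrite inE powersetE setDUl setIUl XSd XS setU0.
    case: (B :|: X \in F); rewrite /= ?andbF ?andbT //.
    apply/idP/idP => [/andP [_ /eqP <-]|sBS]; first exact: subsetIr.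
    rewrite (setIidPl sBS) eqxx andbT; move: sBS; rewrite -setD_eq0 => /eqP ->.
    by rewrite set0U.
  by move=> /andP [/andP [BF _] /eqP e]; rewrite ssU // e.
have fs_ge0 : (0 <= fs F w S)%R.
  by rewrite decomp; apply: sumr_ge0 => X _; exact: Huce.
pose c a := #|[set A in F | a \in A]|.
case: (boolP [exists a, (a \in bigcupF F) && (#|F| <= 2 * c a)]) =>
  [/existsP [a /andP [aF ha]] | /existsPn nf]; first by exists a.
exfalso.
have hlt : forall a, a \in bigcupF F -> 2 * c a < #|F|.
  by move=> a aF; move: (nf a); rewrite aF /= ltnNge.
have c0 : forall a, a \notin bigcupF F -> c a = 0.
  move=> a aF; apply/eqP; rewrite cards_eq0; apply/eqP/setP => A; rewrite !inE.
  apply/negbTE/andP => -[AinF aA]; move/negP: aF; apply.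
  exact: (subsetP (AF A AinF)).
have e1 : \sum_(A in F) sw w A = \sum_a w a * c a.
  rewrite /sw; under eq_bigr do rewrite big_mkcond.
  rewrite exchange_big /=; apply: eq_bigr => a _.
  rewrite -big_mkcondr /c mulnC -sum_nat_const; apply: eq_bigl => A; rewrite inE.
  by [].
have e2 : sw w S = \sum_a (if a \in S then w a else 0) by rewrite /sw big_mkcond.
have fsF : fs F w S = ((2 * \sum_(A in F) sw w A)%N%:Z - (#|F| * sw w S)%N%:Z)%R.
  rewrite /fs /ss sumrB sum_posz big_distrr /= sumr_const.
  by rewrite posz_muln.
have a0S : a0 \in S.
  case: (boolP (a0 \in S)) => // na; have := w0 a0; rewrite inE na a0F => /(_ isT) h.
  by rewrite h in wa0.
move: fs_ge0; rewrite fsF subr_ge0 lez_nat e1 e2 big_distrr big_distrr /=.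
apply/negP; rewrite -ltnNge.
rewrite (bigD1 a0) // [X in _ < X](bigD1 a0) //= a0S -addSn; apply: leq_add.
  by rewrite mulnCA [#|F| * _]mulnC ltn_pmul2l //; exact: hlt.
apply: leq_sum => a _.
case: (boolP (a \in bigcupF F)) => aF; last by rewrite c0 // !muln0.
case aS: (a \in S); last by rewrite w0 // inE aS aF.
rewrite mulnCA [#|F| * _]mulnC leq_mul2l; apply/orP; right; exact: ltnW (hlt a aF).
Qed.
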